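(* Let $j\in\{2,3,4,5,6\}$, $\mathbf c\in\mathbf C^j_{\rm aut}$, $\mathbf m\in\mathbf M_{\mathbf c}$, $n>0$, $\bar s=(s_1,\dots,s_n)\in\mathbb Z^n$, $\bar b=(b_1,\dots,b_n)\in(L_{\mathbf c})^n$ and $\pi\in\operatorname{End}(N_{\mathbf c})$. Put $F^{\bar s,\bar b}_{\mathbf m}:=\sum_{i=1}^ns_i\,(F^{b_i}_{\mathbf m}\restriction\mathcal Z(H_{\mathbf m}))\in\operatorname{End}(\mathcal Z(H_{\mathbf m}))$ and $h'^*:=h^*_{\mathbf c}\circ\pi:N_{\mathbf c}\to H_{\mathbf c}$. Let $\mathcal A^{\bar s,\bar b}_{\mathbf m,\pi}$ be the set of all $g\in\operatorname{End}(H_{\mathbf m})$ with $g\restriction\mathcal Z(H_{\mathbf m})=F^{\bar s,\bar b}_{\mathbf m}$ and $g(x)\in h'^*(h_{\mathbf m}(x))\cdot\mathcal Z(H_{\mathbf m})$ for all $x\in H_{\mathbf m}$. Let $\mathcal F^{\bar s,\bar b}_{\mathbf m,\pi}$ be the set of all functions $f:N_{\mathbf c}\to\mathcal Z(H_{\mathbf m})$ such that for all $a,b\in N_{\mathbf c}$, $f(a)f(b)=F^{\bar s,\bar b}_{\mathbf m}(t')\cdot(t'')^{-1}\cdot f(ab)$, where $t',t''\in\mathcal Z(H_{\mathbf c})$ are the unique elements with $t'h^*_{\mathbf c}(ab)=h^*_{\mathbf c}(a)h^*_{\mathbf c}(b)$ and $t''h'^*(ab)=h'^*(a)h'^*(b)$.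 For $f\in\mathcal F^{\bar s,\bar b}_{\mathbf m,\pi}$ let $g^{\bar s,\bar b}_{\pi,f}:H_{\mathbf m}\to H_{\mathbf m}$ be $g^{\bar s,\bar b}_{\pi,f}(x)=F^{\bar s,\bar b}_{\mathbf m}(t)\cdot f(h_{\mathbf m}(x))\cdot h'^*(h_{\mathbf m}(x))$, where $t\in\mathcal Z(H_{\mathbf m})$ is the unique element with $x=t\,h^*_{\mathbf c}(h_{\mathbf m}(x))$. Then $\mathcal A^{\bar s,\bar b}_{\mathbf m,\pi}=\{g^{\bar s,\bar b}_{\pi,f}: f\in\mathcal F^{\bar s,\bar b}_{\mathbf m,\pi}\}$.
   Context: Groups are not assumed abelian; $\mathcal Z(H)$ is the center of $H$; the group operation in $\mathcal Z(H)$ is written multiplicatively in the formulas above, while sums of endomorphisms of $\mathcal Z(H)$ are pointwise (so $\sum_is_i\phi_i$ sends $z$ to $\prod_i\phi_i(z)^{s_i}$). $J_p$ is the additive group of $p$-adic integers. $\mathbf C^2_{\rm aut}$: tuples $\mathbf c=(L_{\mathbf c},N_{\mathbf c},H_{\mathbf c},h_{\mathbf c},h^*_{\mathbf c},F_{\mathbf c},(Q^{\bar s}_{\mathbf c}))$ with $L_{\mathbf c},H_{\mathbf c}$ groups, $F_{\mathbf c}:L_{\mathbf c}\to\operatorname{Aut}(H_{\mathbf c})$ an injective homomorphism ($F^\ell_{\mathbf c}:=F_{\mathbf c}(\ell)$), $N_{\mathbf c}\trianglelefteq L_{\mathbf c}$, $h_{\mathbf c}:H_{\mathbf c}\to N_{\mathbf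 c}$ an epimorphism with kernel $\mathcal Z(H_{\mathbf c})$ such that $F_{\mathbf c}(h_{\mathbf c}(a))$ is $x\mapsto axa^{-1}$ for all $a\in H_{\mathbf c}$, $h^*_{\mathbf c}:N_{\mathbf c}\to H_{\mathbf c}$ a map (not necessarily a homomorphism) with $h_{\mathbf c}\circ h^*_{\mathbf c}=\mathrm{id}$, and $(b_1,\dots,b_n)\in Q^{\bar s}_{\mathbf c}$ iff $\sum_is_iF^{b_i}_{\mathbf c}\restriction\mathcal Z(H_{\mathbf c})=0$. $\mathbf C^3_{\rm aut}$: add $H^*_{\mathbf c},\mathbb P_{\mathbf c}$ with $\mathcal Z(H_{\mathbf c})$ reduced; $H^*_{\mathbf c}\le H_{\mathbf c}$, $H_{\mathbf c}=\bigcup_{x\in\mathcal Z(H_{\mathbf c})}H^*_{\mathbf c}x$, $\mathcal Z(H^*_{\mathbf c})=\mathcal Z(H_{\mathbf c})\cap H^*_{\mathbf c}$; $\mathbb P_{\mathbf c}$ = set of primes $p$ such that $\mathcal Z(H_{\mathbf c})$ has a nonzero element of $p$-power order (then so does $\mathcal Z(H^*_{\mathbf c})$) or $J_p$ embeds in $\mathcal Z(H_{\mathbf c})$ (then $J_p$ embeds in $\mathcal Z(H^*_{\mathbf c})$). $\mathbf C^4_{\rm aut}$: $\mathbf c\in\mathbf C^3_{\rm aut}$ with $\mathcal Z(H_{\mathbf c})/\mathcal Z(H^*_{\mathbf c})$ torsion-free and $p$-divisible for all primes $p\notin\mathbb P_{\mathbf c}$. $\mathbf C^5_{\rm aut}$: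 pairs $(\mathbf c,\mathbf g)$, $\mathbf c\in\mathbf C^4_{\rm aut}$, $\mathbf g=(\mathbb G_{\mathbf g},(F^\ell_{\mathbf g})_{\ell\in L_{\mathbf c}})$, $\mathbb G_{\mathbf g}$ reduced torsion-free abelian with no $J_p$ embedded, $F^\ell_{\mathbf g}\in\operatorname{Aut}(\mathbb G_{\mathbf g})$, $(b_i)\in Q^{\bar s}_{\mathbf c}\Rightarrow\sum s_iF^{b_i}_{\mathbf g}=0$. $\mathbf C^6_{\rm aut}$: pairs $(\mathbf c,\mathcal G)$, $\mathbf c\in\mathbf C^4_{\rm aut}$, $\mathcal G$ a nonempty set of $\mathbf g$ with $(\mathbf c,\mathbf g)\in\mathbf C^5_{\rm aut}$, closed under restriction to $\mathrm{cl}\{x\}$ (smallest pure subgroup of $\mathbb G_{\mathbf g}$ containing $x$ closed under all $F^\ell_{\mathbf g}$), and containing up to isomorphism every such one-generated $\mathbf g$ embeddable compatibly into $(\mathcal Z(H_{\mathbf c}),(F^\ell_{\mathbf c})_\ell)$. For $j\in\{5,6\}$ the members are pairs and $L_{\mathbf c},H_{\mathbf c},\dots$ denote components of the underlying tuple. $\mathbf M_{\mathbf c}$: the class of $\mathbf m\in\mathbf C^j_{\rm aut}$ with $L_{\mathbf m}=L_{\mathbf c}$, $N_{\mathbf m}=N_{\mathbf c}$, $H_{\mathbf c}\subseteq H_{\mathbf m}$, $h_{\mathbf c}\subseteq h_{\mathbf m}$, $h^*_{\mathbf m}=h^*_{\mathbf c}$, $F^\ell_{\mathbf c}\subseteq F^\ell_{\mathbf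 m}$ for all $\ell$, $Q^{\bar s}_{\mathbf m}=Q^{\bar s}_{\mathbf c}$, $H_{\mathbf m}$ generated by $\mathcal Z(H_{\mathbf m})\cup H_{\mathbf c}$, $\mathcal Z(H_{\mathbf c})=\mathcal Z(H_{\mathbf m})\cap H_{\mathbf c}$; if $j\ge3$ also $\mathbb P_{\mathbf m}=\mathbb P_{\mathbf c}$, $H^*_{\mathbf m}=H^*_{\mathbf c}$; if $j=5$ the same $\mathbf g$; if $j=6$ the same $\mathcal G$. *)

(* Defs.v *)
(* abstract (possibly infinite) groups are mathcomp's
   [groupType] (boot/monoid.v); subsets are Prop-valued predicates. *)
From HB Require Import structures.
From mathcomp Require Import all_boot all_order all_algebra.
Set Implicit Arguments.
Unset Strict Implicit.
Unset Printing Implicit Defensive.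

Local Open Scope group_scope.

Definition zexpg (G : groupType) (x : G) (s : int) : G :=
  match s with Posz n => x ^+ n | Negz n => (x ^+ n.+1)^-1 end.

Section GroupNotions.
Variable G : groupType.

Definition is_subgroup (S : G -> Prop) : Prop :=
  [/\ S 1, (forall x y, S x -> S y -> S (x * y)) & (forall x, S x -> S x^-1)].

Definition is_normal (N : G -> Prop) : Prop :=
  is_subgroup N /\ (forall x l : G, N x -> N (l^-1 * x * l)).

Definition center (H : G -> Prop) (z : G) : Prop :=
  H z /\ (forall x, H x -> z * x = x * z).

Definition generated (A : G -> Prop) (x : G) : Prop :=
  forall S : G -> Prop, is_subgroup S -> (forall y, A y -> S y) -> S x.

Definition hom_on (G' : groupType) (S : G -> Prop) (f : G -> G') : Prop :=
  forall x y, S x -> S y -> f (x * y) = f x * f y.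

Definition endo_on (H : G -> Prop) (f : G -> G) : Prop :=
  (forall x, H x -> H (f x)) /\ hom_on H f.

Definition aut_on (H : G -> Prop) (f : G -> G) : Prop :=
  [/\ endo_on H f,
      (forall x y, H x -> H y -> f x = f y -> x = y)
    & (forall y, H y -> exists2 x, H x & f x = y)].

End GroupNotions.

(* The group L_c is the whole group LT,
   H_c is a subgroup (predicate) of the ambient group T, N_c is a predicate
   on LT.  Maps are total functions; only their values on the relevant
   domains matter.  The component Q^{s}_c is determined by the other data
   (see [Qrel]) and is therefore not stored. *)
Record C2data (LT T : groupType) := {
  cN : LT -> Prop;
  cH : T -> Prop;
  cF : LT -> T -> T;
  ch : T -> LT;
  chs : LT -> T
}.

Section C2.
Variables LT T : groupType.
Implicit Types c m : C2data LT T.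

Definition Fsum c (n : nat) (s : 'I_n -> int) (b : 'I_n -> LT) (z : T) : T :=
  \prod_(i < n) zexpg (cF c (b i) z) (s i).

Definition Qrel c (n : nat) (s : 'I_n -> int) (b : 'I_n -> LT) : Prop :=
  forall z, center (cH c) z -> Fsum c s b z = 1.

Definition isC2 c : Prop :=
  [/\ is_normal (cN c), is_subgroup (cH c),
      [/\ forall l, aut_on (cH c) (cF c l),
          forall l1 l2 x, cH c x -> cF c (l1 * l2) x = cF c l1 (cF c l2 x)
        & forall l1 l2, (forall x, cH c x -> cF c l1 x = cF c l2 x) -> l1 = l2],
      [/\ forall a, cH c a -> cN c (ch c a),
          hom_on (cH c) (ch c),
          forall l, cN c l -> exists2 a, cH c a & ch c a = l
        & forall a, cH c a -> (ch c a = 1 <-> center (cH c) a)]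
    &
      (forall a x, cH c a -> cH c x -> cF c (ch c a) x = a * x * a^-1) /\
      (forall l, cN c l -> cH c (chs c l) /\ ch c (chs c l) = l)].

(* m \in M_c (case j = 2) *)
Definition inM c m : Prop :=
  isC2 m /\
  [/\ (forall l, cN m l <-> cN c l),
      (forall x, cH c x -> cH m x),
      (forall a, cH c a -> ch m a = ch c a),
      (forall l, cN c l -> chs m l = chs c l)
    & (forall l x, cH c x -> cF m l x = cF c l x)] /\
  [/\
      (forall n (s : 'I_n -> int) (b : 'I_n -> LT), Qrel m s b <-> Qrel c s b),
      (forall x, cH m x <-> generated (fun y => center (cH m) y \/ cH c y) x)
    & (forall z, center (cH c) z <-> center (cH m) z /\ cH c z)].

Section Prop35.
Variables (c m : C2data LT T) (n : nat) (s : 'I_n -> int) (b : 'I_n -> LT)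
  (pi : LT -> LT).

Definition hs' (l : LT) : T := chs c (pi l).

(* t' with t' h^*_c(ab) = h^*_c(a) h^*_c(b) *)
Definition tprime (a a' : LT) : T := chs c a * chs c a' * (chs c (a * a'))^-1.
(* t'' with t'' h'^*(ab) = h'^*(a) h'^*(b) *)
Definition tsecond (a a' : LT) : T := hs' a * hs' a' * (hs' (a * a'))^-1.

Definition inA (g : T -> T) : Prop :=
  [/\ endo_on (cH m) g,
      (forall z, center (cH m) z -> g z = Fsum m s b z)
    & (forall x, cH m x ->
         exists2 z, center (cH m) z & g x = hs' (ch m x) * z)].

Definition inFset (f : LT -> T) : Prop :=
  (forall a, cN c a -> center (cH m) (f a)) /\
  (forall a a', cN c a -> cN c a' ->
     f a * f a' = Fsum m s b (tprime a a') * (tsecond a a')^-1 * f (a * a')).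

(* g^{s,b}_{pi,f}; t = x (h^*_c(h_m(x)))^{-1} is the unique element with
   x = t h^*_c(h_m(x)) *)
Definition gpf (f : LT -> T) (x : T) : T :=
  Fsum m s b (x * (chs c (ch m x))^-1) * f (ch m x) * hs' (ch m x).

End Prop35.
End C2.

(* Main.v *)
Require Import Defs.
From mathcomp Require Import all_boot all_order all_algebra.
Set Implicit Arguments.
Unset Strict Implicit.
Unset Printing Implicit Defensive.

Section Gen.
Local Open Scope group_scope.
Variable G : groupType.
Implicit Types x y z : G.

Lemma hom1 (G' : groupType) (S : G -> Prop) (f : G -> G') :
  is_subgroup S -> hom_on S f -> f 1 = 1.
Proof.
case=> S1 _ _ hf; have := hf 1 1 S1 S1; rewrite mulg1 => e.
by apply: (@mulgI _ (f 1)); rewrite mulg1 -e.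
Qed.

Lemma homV (G' : groupType) (S : G -> Prop) (f : G -> G') x :
  is_subgroup S -> hom_on S f -> S x -> f x^-1 = (f x)^-1.
Proof.
move=> hS hf Sx; have e1 := hom1 hS hf; case: hS => S1 SM SV.
have := hf x^-1 x (SV _ Sx) Sx; rewrite mulVg e1 => e.
by apply: (@mulIg _ (f x)); rewrite mulVg e.
Qed.

Variable H : G -> Prop.
Hypothesis hH : is_subgroup H.

Lemma Z1 : center H 1.
Proof. by case: hH => H1 _ _; split => [|x _] //; rewrite mulg1 mul1g. Qed.

Lemma ZM x y : center H x -> center H y -> center H (x * y).
Proof.
case: hH => H1 HM HV [Hx cx] [Hy cy]; split; first exact: HM.
move=> w Hw. rewrite -mulgA (cy w Hw) mulgA (cx w Hw). by rewrite mulgA.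
Qed.

Lemma ZV x : center H x -> center H x^-1.
Proof.
case: hH => H1 HM HV [Hx cx]; split; first exact: HV.
move=> w Hw; apply: (@mulgI _ x); rewrite mulgA mulgV mul1g mulgA cx //.
by rewrite -mulgA mulgV mulg1.
Qed.

Lemma ZH x : center H x -> H x. Proof. by case. Qed.

Lemma Zc x y : center H x -> H y -> x * y = y * x.
Proof. by case=> _ c /c. Qed.

Lemma ZX x n : center H x -> center H (x ^+ n).
Proof.
move=> Zx; elim: n => [|n IH]; first exact: Z1.
by rewrite expgS; apply: ZM.
Qed.

Lemma Zzexp x s : center H x -> center H (zexpg x s).
Proof. by case: s => n Zx /=; [apply: ZX | apply/ZV/ZX]. Qed.

Lemma zexpgM x y s : commute x y -> zexpg (x * y) s = zexpg x s * zexpg y s.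
Proof.
case: s => k cxy /=; rewrite expgMn //.
have cab : commute (x ^+ k.+1) (y ^+ k.+1) by apply: commuteX2.
by rewrite cab invgM.
Qed.

Lemma Zprod n (F : 'I_n -> G) : (forall i, center H (F i)) -> center H (\prod_(i < n) F i).
Proof.
move=> hF; apply: (big_ind (center H)) => //; [exact: Z1 | exact: ZM].
Qed.

End Gen.

Section Main.
Local Open Scope group_scope.
Variables (LT T : groupType) (c m : C2data LT T) (n : nat) (s : 'I_n -> int)
  (b : 'I_n -> LT) (pi : LT -> LT).
Hypotheses (hc : isC2 c) (hm : inM c m) (hpi : endo_on (cN c) pi).

Let Z := center (cH m).

Lemma Hm_sub : is_subgroup (cH m).
Proof. by case: hm => [[_ h _ _ _] _]. Qed.
Lemma Hc_sub : is_subgroup (cH c).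
Proof. by case: hc => _ h _ _ _. Qed.
Lemma N_sub : is_subgroup (cN c).
Proof. by case: hc => [[h _] _ _ _ _]. Qed.
Lemma HcHm x : cH c x -> cH m x.
Proof. by case: hm => _ [[_ h _ _ _] _]; apply: h. Qed.
Lemma ZcZm z : center (cH c) z -> Z z.
Proof. move=> hz; case: hm => _ [_ [_ _ h]]; by case: (proj1 (h z) hz). Qed.
Lemma chsP l : cN c l -> cH c (chs c l) /\ ch c (chs c l) = l.
Proof. by case: hc => _ _ _ _ [_]; apply. Qed.
Lemma chm_c x : cH c x -> ch m x = ch c x.
Proof. by case: hm => _ [[_ _ h _ _] _]; apply: h. Qed.
Lemma chsH l : cN c l -> cH m (chs c l).
Proof. by move/chsP => [/HcHm]. Qed.
Lemma chsm l : cN c l -> ch m (chs c l) = l.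
Proof. by move/chsP => [h e]; rewrite chm_c. Qed.
Lemma chm_hom : hom_on (cH m) (ch m).
Proof. by case: hm => [[_ _ _ [_ h _ _] _] _]. Qed.
Lemma chc_hom : hom_on (cH c) (ch c).
Proof. by case: hc => _ _ _ []. Qed.
Lemma chm_N x : cH m x -> cN c (ch m x).
Proof. by case: hm => [[_ _ _ [h _ _ _] _] [[e _ _ _ _] _]] Hx; apply/(e (ch m x))/h. Qed.
Lemma kerm a : cH m a -> ch m a = 1 -> Z a.
Proof. by case: hm => [[_ _ _ [_ _ _ h] _] _] Ha e; apply/(h a Ha). Qed.
Lemma kerc a : cH c a -> ch c a = 1 -> center (cH c) a.
Proof. by case: hc => _ _ _ [_ _ _ h] _ Ha e; apply/(h a Ha). Qed.
Lemma kerm' a : Z a -> ch m a = 1.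
Proof. by case: hm => [[_ _ _ [_ _ _ h] _] _] [Ha ca]; apply/(h a Ha). Qed.
Lemma piN a : cN c a -> cN c (pi a).
Proof. by case: hpi => h _ /h. Qed.
Lemma piM a a' : cN c a -> cN c a' -> pi (a * a') = pi a * pi a'.
Proof. by case: hpi => _ h; apply: h. Qed.
Lemma pi1 : pi 1 = 1.
Proof. by case: hpi => _ h; apply: (hom1 N_sub h). Qed.

Lemma FmZ l z : Z z -> Z (cF m l z).
Proof.
case: hm => [[_ _ [h _ _] _ _] _] [Hz cz].
case: (h l) => [[Fmap Fhom] _ Fsurj].
split; first exact: Fmap.
move=> y /Fsurj [y' Hy' <-].
by rewrite -!Fhom // cz.
Qed.

Lemma FsumZ z : Z z -> Z (Fsum m s b z).
Proof.
move=> Zz; apply: (Zprod Hm_sub) => i; apply: (Zzexp Hm_sub); exact: FmZ.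
Qed.

Lemma FsumM z z' : Z z -> Z z' -> Fsum m s b (z * z') = Fsum m s b z * Fsum m s b z'.
Proof.
move=> Zz Zz'; rewrite /Fsum -prodgM_commute.
  apply: eq_bigr => i _.
  case: hm => [[_ _ [h _ _] _ _] _].
  case: (h (b i)) => [[Fmap Fhom] _ _].
  rewrite Fhom ?zexpgM; [by [] | | exact: ZH Zz | exact: ZH Zz'].
  apply: (Zc (FmZ (b i) Zz)); apply: ZH; exact: FmZ.
move=> i j _ _; apply: (Zc (Zzexp Hm_sub (s i) (FmZ (b i) Zz))).
apply: ZH; apply: (Zzexp Hm_sub); exact: FmZ.
Qed.

Lemma Fsum1 : Fsum m s b 1 = 1.
Proof.
have Z1' := Z1 Hm_sub.
have := FsumM Z1' Z1'; rewrite mulg1 => e.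
by apply: (@mulgI _ (Fsum m s b 1)); rewrite mulg1 -e.
Qed.

Lemma FsumV z : Z z -> Fsum m s b z^-1 = (Fsum m s b z)^-1.
Proof.
move=> Zz; have := FsumM (ZV Hm_sub Zz) Zz; rewrite mulVg Fsum1 => e.
by apply: (@mulIg _ (Fsum m s b z)); rewrite mulVg e.
Qed.

Lemma tpZ a a' : cN c a -> cN c a' -> Z (tprime c a a').
Proof.
move=> Na Na'; have Naa : cN c (a * a').
  by case: N_sub => _ h _; apply: h.
case: (chsP Na) (chsP Na') (chsP Naa) => [H1 e1] [H2 e2] [H3 e3].
case: Hc_sub => _ HM HV.
apply: ZcZm; apply: kerc; rewrite /tprime.
  by apply: (HM); [apply: (HM) | apply: (HV)].
rewrite chc_hom; [|by apply: (HM)|by apply: (HV)].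
by rewrite chc_hom // (homV Hc_sub chc_hom H3) e1 e2 e3 mulgV.
Qed.

Lemma tsZ a a' : cN c a -> cN c a' -> Z (tsecond c pi a a').
Proof.
move=> Na Na'; have Naa : cN c (a * a').
  by case: N_sub => _ h _; apply: h.
rewrite /tsecond /hs' piM //.
have := tpZ (piN Na) (piN Na'); rewrite /tprime; done.
Qed.

Lemma tZ x : cH m x -> Z (x * (chs c (ch m x))^-1).
Proof.
move=> Hx; have Na := chm_N Hx.
have Hs := chsH Na.
case: Hm_sub => _ HM HV.
apply: kerm; first by apply: (HM) => //; apply: (HV).
by rewrite (chm_hom Hx (HV _ Hs)) (homV Hm_sub chm_hom Hs) chsm // mulgV.
Qed.

Lemma hsH a : cN c a -> cH m (hs' c pi a).
Proof. by move=> Na; apply: chsH; apply: piN. Qed.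


Lemma fwd g : inA c m s b pi g ->
  exists2 f, inFset c m s b pi f & forall x, cH m x -> g x = gpf c m s b pi f x.
Proof.
case=> [[gmap ghom] gZ gform].
have HS := Hm_sub; case: (HS) => H1 HM HV.
have fE a : cN c a -> exists2 z, Z z & g (chs c a) * (hs' c pi a)^-1 = z /\ g (chs c a) = hs' c pi a * z.
  move=> Na; case: (gform _ (chsH Na)) => z Zz ->; rewrite chsm //.
  exists z => //; split => //.
  by rewrite -(Zc Zz (hsH Na)) mulgK.
exists (fun a => g (chs c a) * (hs' c pi a)^-1).
- split.
  + by move=> a Na; case: (fE a Na) => z Zz [-> _].
  move=> a a' Na Na'.
  have Naa : cN c (a * a') by case: N_sub => _ h _; apply: h.
  case: (fE a Na) => z1 Zz1 [-> e1].
  case: (fE a' Na') => z2 Zz2 [-> e2].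
  case: (fE _ Naa) => z3 Zz3 [-> e3].
  have Ztp := tpZ Na Na'; have Zts := tsZ Na Na'.
  have Hha := hsH Na; have Hha' := hsH Na'; have Hhaa := hsH Naa.
  set ha := hs' c pi a in e1 Hha *; set ha' := hs' c pi a' in e2 Hha' *.
  set haa := hs' c pi (a * a') in e3 Hhaa *.
  set tp := tprime c a a' in Ztp *; set ts := tsecond c pi a a' in Zts *.
  have E : ha * z1 * (ha' * z2) = Fsum m s b tp * (haa * z3).
    have -> : Fsum m s b tp = g tp by rewrite gZ.
    rewrite -e1 -e2 -e3 -(ghom _ _ (chsH Na) (chsH Na')) -(ghom _ _ (ZH Ztp) (chsH Naa)).
    by rewrite /tp /tprime mulgVK.
  have ets : ha * ha' = ts * haa by rewrite /ts /tsecond mulgVK.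
  clearbody ts tp ha ha' haa.
  apply: (@mulgI _ (ha * ha')).
  have -> : ha * ha' * (z1 * z2) = ha * z1 * (ha' * z2).
    by rewrite !mulgA -(mulgA ha z1 ha') (Zc Zz1 Hha') mulgA.
  rewrite E ets.
  rewrite !mulgA -(mulgA ts haa) -(Zc (FsumZ Ztp) Hhaa) !mulgA.
  rewrite -(mulgA (ts * Fsum m s b tp) haa) -(Zc (ZV HS Zts) Hhaa).
  by rewrite -(Zc (FsumZ Ztp) (ZH Zts)) !mulgA mulgK.
move=> x Hx.
have Na := chm_N Hx; have Zt := tZ Hx.
rewrite /gpf -(mulgA (Fsum m s b _)) mulgVK -gZ //.
rewrite -ghom ?mulgVK //; [exact: ZH Zt | exact: chsH].
Qed.


Lemma bwd g f : inFset c m s b pi f ->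
  (forall x, cH m x -> g x = gpf c m s b pi f x) -> inA c m s b pi g.
Proof.
case=> fZ fco hg.
have HS := Hm_sub; case: (HS) => H1 HM HV.
have N1 : cN c 1 by case: N_sub.
have Zc1 : Z (chs c 1).
  by case: (chsP N1) => Hc1 e1; apply: ZcZm; apply: kerc.
have hs1 : hs' c pi 1 = chs c 1 by rewrite /hs' pi1.
have f1 : f 1 = Fsum m s b (chs c 1) * (chs c 1)^-1.
  have := fco 1 1 N1 N1.
  rewrite /tprime /tsecond !mulg1 hs1 !mulgK => e.
  by apply: (@mulIg _ (f 1)); rewrite e.
have gH x : cH m x -> cH m (gpf c m s b pi f x).
  move=> Hx; have Na := chm_N Hx.
  apply: (HM); [apply: (HM) | exact: hsH].
    exact: (ZH (FsumZ (tZ Hx))).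
  exact: (ZH (fZ _ Na)).
split; [split | |].
- by move=> x Hx; rewrite hg //; apply: gH.
- move=> x y Hx Hy.
  have Hxy := HM _ _ Hx Hy.
  rewrite !hg // /gpf.
  have Na := chm_N Hx; have Na' := chm_N Hy.
  have Ztx := tZ Hx; have Zty := tZ Hy.
  rewrite chm_hom //.
  set a := ch m x in Na Ztx *; set a' := ch m y in Na' Zty *.
  have Naa : cN c (a * a') by case: N_sub => _ h _; apply: h.
  have Ztp := tpZ Na Na'; have Zts := tsZ Na Na'.
  have Hha := hsH Na; have Hha' := hsH Na'; have Hhaa := hsH Naa.
  have Zf := fZ _ Na; have Zf' := fZ _ Na'; have Zff := fZ _ Naa.
  have ets : hs' c pi a * hs' c pi a' = tsecond c pi a a' * hs' c pi (a * a').
    by rewrite /tsecond mulgVK.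
  have etp : x * y * (chs c (a * a'))^-1 =
      x * (chs c a)^-1 * (y * (chs c a')^-1) * tprime c a a'.
    rewrite /tprime -(mulgA (x * (chs c a)^-1)) (mulgA (y * (chs c a')^-1)).
    rewrite (mulgA (y * (chs c a')^-1)) (Zc Zty (chsH Na)).
    by rewrite !mulgA !mulgVK.
  have := fco a a' Na Na'.
  move: Ztx Zty etp ets Ztp Zts Hha Hha' Hhaa; rewrite -/a -/a'.
  set tx := x * _; set ty := y * _.
  set tp := tprime c a a'; set ts := tsecond c pi a a'.
  set ha := hs' c pi a; set ha' := hs' c pi a'; set haa := hs' c pi (a * a').
  move=> Ztx Zty -> ets Ztp Zts Hha Hha' Hhaa efco.
  clearbody tx ty tp ts ha ha' haa.
  rewrite !FsumM //; try by apply: ZM.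
  set Fx := Fsum m s b tx; set Fy := Fsum m s b ty; set Fp := Fsum m s b tp in efco *.
  have ZFx : Z Fx := FsumZ Ztx; have ZFy : Z Fy := FsumZ Zty.
  have ZFp : Z Fp := FsumZ Ztp.
  clearbody Fx Fy Fp.
  have -> : Fx * f a * ha * (Fy * f a' * ha') = Fx * Fy * (f a * f a') * (ha * ha').
    have ZC : Z (Fy * f a') by apply: ZM.
    rewrite (mulgA (Fx * f a * ha) (Fy * f a')) -(mulgA (Fx * f a) ha) -(Zc ZC Hha).
    rewrite !mulgA -(mulgA Fx (f a) Fy) (Zc Zf (ZH ZFy)).
    by rewrite !mulgA.
  rewrite efco ets !mulgA -(mulgA _ (f (a * a')) ts) (Zc Zff (ZH Zts)).
  by rewrite !mulgA mulgVK.
- move=> z Zz; rewrite hg; last exact: ZH Zz.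
  rewrite /gpf (kerm' Zz) f1 hs1.
  rewrite FsumM //; last exact: ZV.
  rewrite FsumV // !mulgA mulgVK.
  by rewrite mulgVK.
- move=> x Hx; have Na := chm_N Hx.
  exists (Fsum m s b (x * (chs c (ch m x))^-1) * f (ch m x)).
    exact: (ZM HS (FsumZ (tZ Hx)) (fZ _ Na)).
  by rewrite hg // /gpf (Zc (ZM HS (FsumZ (tZ Hx)) (fZ _ Na)) (hsH Na)).
Qed.

End Main.

Theorem proposition3p5 (LT T : groupType) (c m : C2data LT T)
  (n : nat) (s : 'I_n -> int) (b : 'I_n -> LT) (pi : LT -> LT) :
  isC2 c -> inM c m -> (0 < n)%N ->
  endo_on (cN c) pi ->
  forall g : T -> T,
    inA c m s b pi g <->
    exists2 f : LT -> T, inFset c m s b pi f &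
      forall x, cH m x -> g x = gpf c m s b pi f x.
Proof.
move=> hc hm _ hpi g; split.
  exact: fwd.
by case=> f hf hg; apply: (bwd hc hm hpi hf hg).
Qed.
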